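(* Let $(R,+,\cdot)$ be a finite simple additively idempotent semiring with $|R|>2$ and let $(M,+)$ be a finite idempotent sub-irreducible $R$-semimodule. Then: (1) if $\infty_R x\ne\infty_M$ for some $x\in M$, then $(M,+)$ has a neutral element $0_M$, $x=0_M$, and $R0_M=\{0_M\}$; (2) $\infty_R$ is right absorbing if and only if $R\infty_M=\{\infty_M\}$; (3) if $\infty_R$ is not left absorbing then $(M,+)$ has a neutral element $0_M$ and $R0_M=\{0_M\}$; (4) if $\infty_R$ is left absorbing, $(M,+)$ is quotient-irreducible, $|M|>2$, and $(M,+)$ has a neutral element $0_M$, then $R0_M=M$.
   Context: A semiring is a nonempty set with a commutative semigroup operation $+$ and a semigroup operation $\cdot$ satisfying both distributive laws; simple if its only congruences are the identity and the full relation; additively idempotent if $r+r=r$, with order $x\le y:\Leftrightarrow x+y=y$ and greatest element $\infty_R=\sum_{r\in R}r$. An element $r$ is right absorbing if $sr=r$ for all $s\in R$, left absorbing if $rs=r$ for all $s$. An $R$-semimodule is a commutative semigroup $(M,+)$ with an action $R\times M\to M$ satisfying $r(sx)=(rs)x$, $(r+s)x=rx+sx$, $r(x+y)=rx+ry$; idempotent if $x+x=x$, with order defined likewise and greatest element $\infty_M$. $Rx=\{rx:r\in R\}$. A subsemimodule is a subsemigroup closed under the action; a semimodule congruence is an equivalence compatible with $+$ and the action. $M$ is quasitrivial if $rx=sx$ for all $r,s,x$; id-quasitrivial if $rx=x$ for all $r,x$; sub-irreducible if not quasitrivial and all proper subsemimodules are id-quasitrivial; quotient-irreducible if not quasitrivial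 and its only congruences are the identity and $M\times M$. *)

(* Defs.v *)
From mathcomp Require Import all_boot.
Set Implicit Arguments. Unset Strict Implicit. Unset Printing Implicit Defensive.

(* Semirings in the sense of the paper: no 0 or 1 required. *)
Definition is_semiring (R : Type) (addR mulR : R -> R -> R) : Prop :=
  [/\ associative addR, commutative addR, associative mulR,
      left_distributive mulR addR & right_distributive mulR addR].

Definition add_idempotent (T : Type) (add : T -> T -> T) : Prop :=
  forall x, add x x = x.

Definition fsum (T : Type) (add : T -> T -> T) (s : seq T) : option T :=
  match s with
  | [::] => None
  | x :: s' => Some (foldr add x s')
  end.

(* infty_T = sum of all elements of the finite type T. *)
Definition sum_all (T : finType) (add : T -> T -> T) : option T :=
  fsum add (enum T).

Definition is_equiv (T : Type) (e : T -> T -> Prop) : Prop :=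
  (forall x, e x x) /\ (forall x y, e x y -> e y x) /\
  (forall x y z, e x y -> e y z -> e x z).

Definition semiring_congruence (R : Type) (addR mulR : R -> R -> R)
  (e : R -> R -> Prop) : Prop :=
  is_equiv e /\
  (forall a b c d, e a b -> e c d -> e (addR a c) (addR b d)) /\
  (forall a b c d, e a b -> e c d -> e (mulR a c) (mulR b d)).

Definition simple_semiring (R : Type) (addR mulR : R -> R -> R) : Prop :=
  forall e, semiring_congruence addR mulR e ->
    (forall x y, e x y <-> x = y) \/ (forall x y, e x y).

Definition is_semimodule (R M : Type) (addR mulR : R -> R -> R)
  (addM : M -> M -> M) (act : R -> M -> M) : Prop :=
  [/\ associative addM, commutative addM,
      (forall r s x, act r (act s x) = act (mulR r s) x),
      (forall r s x, act (addR r s) x = addM (act r x) (act s x)) &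
      (forall r x y, act r (addM x y) = addM (act r x) (act r y))].

Definition quasitrivial (R M : Type) (act : R -> M -> M) : Prop :=
  forall r s x, act r x = act s x.

Definition is_subsemimodule (R M : finType) (addM : M -> M -> M)
  (act : R -> M -> M) (S : {set M}) : Prop :=
  (forall x y, x \in S -> y \in S -> addM x y \in S) /\
  (forall r x, x \in S -> act r x \in S).

Definition id_quasitrivial_on (R M : finType) (act : R -> M -> M)
  (S : {set M}) : Prop :=
  forall r x, x \in S -> act r x = x.

Definition sub_irreducible (R M : finType) (addM : M -> M -> M)
  (act : R -> M -> M) : Prop :=
  ~ quasitrivial act /\
  forall S : {set M}, is_subsemimodule addM act S -> S != [set: M] ->
    id_quasitrivial_on act S.

Definition semimodule_congruence (R M : Type) (addM : M -> M -> M)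
  (act : R -> M -> M) (e : M -> M -> Prop) : Prop :=
  is_equiv e /\
  (forall a b c d, e a b -> e c d -> e (addM a c) (addM b d)) /\
  (forall r a b, e a b -> e (act r a) (act r b)).

Definition quotient_irreducible (R M : Type) (addM : M -> M -> M)
  (act : R -> M -> M) : Prop :=
  ~ quasitrivial act /\
  forall e, semimodule_congruence addM act e ->
    (forall x y, e x y <-> x = y) \/ (forall x y, e x y).

Definition neutral (M : Type) (addM : M -> M -> M) (z : M) : Prop :=
  forall x, addM z x = x.

Definition orbitR (R M : finType) (act : R -> M -> M) (x : M) : {set M} :=
  [set act r x | r : R].

Definition right_absorbing (R : Type) (mulR : R -> R -> R) (a : R) : Prop :=
  forall s, mulR s a = a.
Definition left_absorbing (R : Type) (mulR : R -> R -> R) (a : R) : Prop :=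
  forall s, mulR a s = a.

(* Main.v *)
Require Import Defs.
From mathcomp Require Import all_boot.

Lemma fold_top (T : eqType) (add : T -> T -> T) :
  associative add -> commutative add -> add_idempotent add ->
  forall s x r, r \in x :: s -> add (foldr add x s) r = foldr add x s.
Proof.
move=> aA cA iA; elim=> [|y s IH] x r /=.
  by rewrite inE => /eqP ->; rewrite iA.
rewrite !inE; case/orP=> [/eqP ->|].
  by rewrite -(aA y) IH // inE eqxx.
case/orP=> [/eqP ->|H].
  by rewrite -(aA y) (cA _ y) (aA y) iA.
by rewrite -(aA y) IH // inE H orbT.
Qed.

Lemma sum_all_top (T : finType) (add : T -> T -> T) t :
  associative add -> commutative add -> add_idempotent add ->
  sum_all add = Some t -> forall r, add t r = t.
Proof.
move=> aA cA iA; rewrite /sum_all /fsum.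
have : forall r, r \in enum T by move=> r; rewrite mem_enum.
case: (enum T) => [|x s] //= Hm [<-] r.
by apply: fold_top => //; apply: Hm.
Qed.

Lemma no_trivial_mul (R : finType) (addR mulR : R -> R -> R) :
  is_semiring addR mulR -> simple_semiring addR mulR ->
  add_idempotent addR -> 2 < #|R| -> ~ (forall r s, mulR r s = s).
Proof.
case=> aR cR _ _ _ Hs iR Hc Hm.
have cls : forall c, (forall r, addR r c = r) \/ (forall r, addR r c = c).
  move=> c.
  have Hcong : semiring_congruence addR mulR (fun r s => addR r c = addR s c).
    split; [split; [by [] | split; [by [] | by move=> x y z -> ->]] | split].
      move=> a b c' d H1 H2.
      have E : forall u v, addR (addR u v) c = addR (addR u c) (addR v c).
        by move=> u v; rewrite -{1}(iR c) !aR; congr addR; rewrite -!aR (cR v).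
      by rewrite E H1 H2 -E.
    by move=> a b c' d _ H2; rewrite !Hm.
  case: (Hs _ Hcong) => H; [left|right] => r.
    by apply/(H _ _); rewrite -aR iR.
  by rewrite (H r c) iR.
pose B := [set c | [forall r, addR r c == r]].
have HB : #|B| <= 1.
  apply/card_le1P => x; rewrite inE => /forallP Hx y; rewrite !inE.
  apply/forallP/eqP => [Hy|->//].
  by rewrite -(eqP (Hx y)) cR (eqP (Hy x)).
have HC : #|~: B| <= 1.
  apply/card_le1P => x; rewrite !inE => Hx y; rewrite !inE.
  have Tx : forall r, addR r x = x.
    case: (cls x) => // H; case/forallP: Hx => r; by rewrite H.
  apply/idP/eqP => [Hy|->//].
  have Ty : forall r, addR r y = y.
    case: (cls y) => // H; case/forallP: Hy => r; by rewrite H.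
  by rewrite -(Tx y) cR Ty.
by move: Hc; rewrite -(cardsC B); move: HB HC; case: #|B| => [|[|n]] //; case: #|~: B| => [|[|m]].
Qed.

Lemma faithful_act (R M : finType) (addR mulR : R -> R -> R) (addM : M -> M -> M)
  (act : R -> M -> M) :
  is_semimodule addR mulR addM act -> simple_semiring addR mulR ->
  ~ quasitrivial act -> forall r s, (forall z, act r z = act s z) -> r = s.
Proof.
case=> _ _ actM actD _ Hs nq.
have Hcong : semiring_congruence addR mulR (fun r s => forall z, act r z = act s z).
  split; [split; [by [] | split; [by move=> x y H z; rewrite H | by move=> x y w H1 H2 z; rewrite H1 H2]] | split].
    by move=> a b c d H1 H2 z; rewrite !actD H1 H2.
  by move=> a b c d H1 H2 z; rewrite -!actM H2 H1.
case: (Hs _ Hcong) => H r s; first by move/H.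
by move=> _; exfalso; apply: nq => r' s' x; apply: (H r' s').
Qed.

Lemma orbit_const (R M : finType) (addR mulR : R -> R -> R) (addM : M -> M -> M)
  (act : R -> M -> M) :
  is_semiring addR mulR -> is_semimodule addR mulR addM act -> simple_semiring addR mulR ->
  add_idempotent addR -> 2 < #|R| -> ~ quasitrivial act ->
  forall x, (forall r s, act r (act s x) = act s x) -> forall r s, act r x = act s x.
Proof.
move=> HR HM Hs iR Hc nq x Hfix.
have faith := @faithful_act _ _ _ _ _ _ HM Hs nq.
case: HM => _ _ actM actD _.
have Hcong : semiring_congruence addR mulR (fun r s => act r x = act s x).
  split; [split; [by [] | split; [by [] | by move=> a b c -> ->]] | split].
    by move=> a b c d H1 H2; rewrite !actD H1 H2.
  by move=> a b c d H1 H2; rewrite -!actM !Hfix.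
case: (Hs _ Hcong) => H; last by move=> r s; apply: H.
exfalso; apply: (@no_trivial_mul _ _ _ HR Hs iR Hc) => r s.
by apply/(H _ _); rewrite -actM Hfix.
Qed.

Theorem proposition2p22
  (R M : finType) (addR mulR : R -> R -> R) (addM : M -> M -> M)
  (act : R -> M -> M)
  (HR : is_semiring addR mulR) (HRsimple : simple_semiring addR mulR)
  (HRidem : add_idempotent addR) (HRcard : 2 < #|R|)
  (HM : is_semimodule addR mulR addM act) (HMidem : add_idempotent addM)
  (HMirr : sub_irreducible addM act)
  (infR : R) (HinfR : sum_all addR = Some infR)
  (infM : M) (HinfM : sum_all addM = Some infM) :
  (* (1) *)
  (forall x : M, act infR x <> infM ->
     exists z : M, [/\ neutral addM z, x = z & orbitR act z = [set z]]) /\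
  (* (2) *)
  (right_absorbing mulR infR <-> orbitR act infM = [set infM]) /\
  (* (3) *)
  (~ left_absorbing mulR infR ->
     exists z : M, neutral addM z /\ orbitR act z = [set z]) /\
  (* (4) *)
  (left_absorbing mulR infR -> quotient_irreducible addM act -> 2 < #|M| ->
     forall z : M, neutral addM z -> orbitR act z = [set: M]).
Proof.
have HR' := HR; have HM' := HM.
case: HR' => aR cR _ _ _.
case: HM' => aM cM actM actD actA.
case: HMirr => nq Hsub.
have topR := @sum_all_top _ _ _ aR cR HRidem HinfR.
have topM := @sum_all_top _ _ _ aM cM HMidem HinfM.
have faith := @faithful_act _ _ _ _ _ _ HM HRsimple nq.
have ocst := @orbit_const _ _ _ _ _ _ HR HM HRsimple HRidem HRcard nq.
have nomul := @no_trivial_mul _ _ _ HR HRsimple HRidem HRcard.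
have orbit_sub : forall z, is_subsemimodule addM act (orbitR act z).
  move=> z; split.
    move=> u v /imsetP [r _ ->] /imsetP [s _ ->].
    by apply/imsetP; exists (addR r s) => //; rewrite actD.
  move=> r u /imsetP [s _ ->].
  by apply/imsetP; exists (mulR r s) => //; rewrite actM.
have inorb : forall r z, act r z \in orbitR act z.
  by move=> r z; apply/imsetP; exists r.
have infty : forall x r, act r x = infM -> act infR x = infM.
  move=> x r H; rewrite -(topR r) actD H cM topM //.
have [y Hy] : exists y, orbitR act y = [set: M].
  case: (boolP [exists y, orbitR act y == [set: M]]) => [/existsP [y /eqP Hy]|Hn].
    by exists y.
  exfalso; apply: nomul => r s; apply: faith => z.
  have Hz : orbitR act z != [set: M].
    by apply/negP => Hz; case/negP: Hn; apply/existsP; exists z.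
  by rewrite -actM (Hsub _ (orbit_sub z) Hz).
have infy : act infR y = infM.
  have : infM \in orbitR act y by rewrite Hy inE.
  by case/imsetP => r _ /esym /infty.
have Horb : forall z, exists r, z = act r y.
  move=> z; have : z \in orbitR act y by rewrite Hy inE.
  by case/imsetP => r _ ->; exists r.
have P1 : forall x, act infR x <> infM -> neutral addM x /\ forall r, act r x = x.
  move=> x Hx.
  have Rx_ne : orbitR act x != [set: M].
    apply/negP => /eqP E; apply: Hx.
    have : infM \in orbitR act x by rewrite E inE.
    by case/imsetP => r _ /esym /infty.
  have fixo := Hsub _ (orbit_sub x) Rx_ne.
  have Hall := ocst x (fun r s => fixo r _ (inorb s x)).
  pose b := act infR x.
  have Hb : forall r, act r x = b by move=> r; apply: (Hall r infR).
  have Hbb : forall r, act r b = b by move=> r; rewrite /b actM (Hall _ infR).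
  pose S := [set w | (w == x) || [forall r, act r w == b]].
  have HS : is_subsemimodule addM act S.
    split.
      move=> u v; rewrite !inE => /orP [/eqP ->|/forallP Hu] /orP [/eqP ->|/forallP Hv].
      - by rewrite HMidem eqxx.
      - by apply/orP; right; apply/forallP => r; rewrite actA Hb (eqP (Hv r)) HMidem.
      - by apply/orP; right; apply/forallP => r; rewrite actA Hb (eqP (Hu r)) HMidem.
      - by apply/orP; right; apply/forallP => r; rewrite actA (eqP (Hu r)) (eqP (Hv r)) HMidem.
    move=> r u; rewrite !inE => /orP [/eqP ->|/forallP Hu]; apply/orP; right; apply/forallP => s.
      by rewrite actM Hb.
    by rewrite (eqP (Hu r)) Hbb.
  have HSne : S != [set: M].
    apply/negP => /eqP E; apply: nq => r s w.
    have : w \in S by rewrite E inE.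
    rewrite inE => /orP [/eqP ->|/forallP Hw]; first by rewrite !Hb.
    by rewrite (eqP (Hw r)) (eqP (Hw s)).
  have fixx : forall r, act r x = x.
    by move=> r; apply: (Hsub _ HS HSne); rewrite inE eqxx.
  split => //.
  pose U := [set addM x w | w : M].
  have HU : is_subsemimodule addM act U.
    split.
      move=> u v /imsetP [w _ ->] /imsetP [w' _ ->].
      apply/imsetP; exists (addM w w') => //.
      by rewrite -aM (aM w) (cM w) -(aM x) aM HMidem.
    move=> r u /imsetP [w _ ->].
    by apply/imsetP; exists (act r w) => //; rewrite actA fixx.
  case: (boolP (U == [set: M])) => [/eqP E|HUne].
    move=> w; have : w \in U by rewrite E inE.
    by case/imsetP => w0 _ ->; rewrite aM HMidem.
  have fixU := Hsub _ HU HUne.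
  have Hc : forall z, addM x z = addM x y.
    move=> z; case: (Horb z) => r ->.
    by rewrite -{1}(fixx r) -actA fixU //; apply/imsetP; exists y.
  exfalso; apply: Hx; rewrite fixx.
  by rewrite -{1}(HMidem x) Hc -(Hc infM) cM topM.
have orb1 : forall x, (forall r, act r x = x) -> orbitR act x = [set x].
  move=> x Hx; apply/setP => w; rewrite in_set1.
  apply/imsetP/eqP => [[r _ ->]|->]; first by rewrite Hx.
  by exists infR => //; rewrite Hx.
split.
  move=> x Hx; case: (P1 x Hx) => Hn Hf; exists x; split => //.
  exact: orb1.
split.
  split.
    move=> Hra; apply: orb1 => r.
    by rewrite -infy actM Hra.
  move=> Ho s; apply: faith => z.
  have Hs' : act s infM = infM.
    by apply/set1P; rewrite -Ho inorb.
  rewrite -actM; case: (act infR z =P infM) => [->//|Hz].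
  by case: (P1 z Hz) => _ Hf; rewrite !Hf.
split.
  move=> Hnl.
  case: (boolP [exists x, act infR x != infM]) => [/existsP [x /eqP Hx]|Hn].
    case: (P1 x Hx) => Hn Hf; exists x; split => //; exact: orb1.
  exfalso; apply: Hnl => s; apply: faith => z.
  have H : forall w, act infR w = infM.
    by move=> w; apply/eqP; apply: contraNT Hn => Hw; apply/existsP; exists w.
  by rewrite -actM !H.
move=> Hla [_ Hq] HMc z Hz.
have Hcong : semimodule_congruence addM act (fun u v => act infR u = act infR v).
  split; [split; [by [] | split; [by [] | by move=> a b c -> ->]] | split].
    by move=> a b c d H1 H2; rewrite !actA H1 H2.
  by move=> r a b H; rewrite !actM Hla.
have Hfull : forall u, act infR u = infM.
  case: (Hq _ Hcong) => H.
    exfalso; apply: nq => r s x.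
    have E : forall r, act r x = x by move=> r'; apply/(H _ _); rewrite actM Hla.
    by rewrite !E.
  by move=> u; rewrite -infy; apply: H.
case: (boolP (orbitR act z == [set: M])) => [/eqP //|Hne].
exfalso.
have fixo := Hsub _ (orbit_sub z) Hne.
have Hall := ocst z (fun r s => fixo r _ (inorb s z)).
have Hi : forall r, act r z = infM by move=> r; rewrite -(Hfull z); apply: Hall.
have Hii : forall r, act r infM = infM by move=> r; rewrite -(Hi infR) actM Hi.
pose S := [set z; infM].
have HS : is_subsemimodule addM act S.
  split.
    move=> u v; rewrite !inE => /orP [/eqP ->|/eqP ->] /orP [/eqP ->|/eqP ->];
      by rewrite ?HMidem ?Hz ?topM ?eqxx ?orbT.
  by move=> r u; rewrite !inE => /orP [/eqP ->|/eqP ->]; rewrite ?Hi ?Hii eqxx orbT.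
case: (boolP (S == [set: M])) => [/eqP E|HSne].
  move: HMc; rewrite -cardsT -E cards2.
  by case: (z != infM).
have Ez : z = infM by rewrite -(Hfull z); apply/esym/(Hsub _ HS HSne); rewrite !inE eqxx.
apply: nq => r s w.
have Ew : w = infM by rewrite -(Hz w) Ez topM.
by rewrite Ew !Hii.
Qed.
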